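(* Consider the algebra of Laurent polynomials in nonzero variables $a,b,c,d,e,f,g,h,i$ with the log-canonical Poisson bracket determined by $\{a,b\}=0,\ \{a,c\}=-\tfrac14 ac,\ \{a,d\}=-\tfrac14 ad,\ \{a,e\}=0,\ \{a,f\}=\tfrac14 af,\ \{a,g\}=-\tfrac14 ag,\ \{a,h\}=\tfrac14 ah,\ \{a,i\}=\tfrac14 ai,$ $\{b,c\}=\tfrac14 bc,\ \{b,d\}=0,\ \{b,e\}=\tfrac14 be,\ \{b,f\}=\tfrac14 bf,\ \{b,g\}=0,\ \{b,h\}=-\tfrac14 bh,\ \{b,i\}=0,$ $\{c,d\}=-\tfrac14 cd,\ \{c,e\}=\tfrac14 ce,\ \{c,f\}=-\tfrac14 cf,\ \{c,g\}=\{c,h\}=0,\ \{c,i\}=\tfrac14 ci,$ $\{d,e\}=-\tfrac14 de,\ \{d,f\}=\{d,g\}=\{d,h\}=0,\ \{d,i\}=\tfrac14 di,$ $\{e,f\}=-\tfrac14 ef,\ \{e,g\}=\{e,h\}=\{e,i\}=0,$ $\{f,g\}=-\tfrac14 fg,\ \{f,h\}=\tfrac14 fh,\ \{f,i\}=0,\ \{g,h\}=\tfrac14 gh,\ \{g,i\}=-\tfrac14 gi,\ \{h,i\}=0$. Then $bdeghi$ is a Casimir element, and it is the only Casimir (so the generic symplectic leaves are $8$-dimensional).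
   Context: A log-canonical bracket is extended from the generators to all Laurent polynomials by bilinearity, antisymmetry and the Leibniz rule. (These are the $\lambda$-lengths of a complete system of arcs on a Riemann sphere with one hole with six bordered cusps — the $PII^{JM}$ case.) *)

(* Defs.v *)
(* Laurent polynomials in 9 variables a,b,c,d,e,f,g,h,i
   (indices 0..8) over a field R, represented as formal finite sums of terms
   (coefficient, exponent vector in Z^9). Two representations denote the same
   Laurent polynomial iff all coefficients ([lcoef]) agree. *)
From HB Require Import structures.
From mathcomp Require Import all_boot all_order all_algebra.
Set Implicit Arguments. Unset Strict Implicit. Unset Printing Implicit Defensive.
Import Order.TTheory GRing.Theory Num.Theory.
Local Open Scope ring_scope.

Definition expo := 'rV[int]_9.

Definition laurent (R : Type) := seq (R * expo).

Definition lcoef (R : fieldType) (P : laurent R) (w : expo) : R :=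
  \sum_(t <- P | t.2 == w) t.1.

Definition leq_laurent (R : fieldType) (P Q : laurent R) : Prop :=
  forall w, lcoef P w = lcoef Q w.

(* 4 * {x_i, x_j} / (x_i x_j) for the generators, rows/columns a..i *)
Definition Btable : seq (seq int) :=
  [:: [:: 0; 0;-1;-1; 0; 1;-1; 1; 1];
      [:: 0; 0; 1; 0; 1; 1; 0;-1; 0];
      [:: 1;-1; 0;-1; 1;-1; 0; 0; 1];
      [:: 1; 0; 1; 0;-1; 0; 0; 0; 1];
      [:: 0;-1;-1; 1; 0;-1; 0; 0; 0];
      [::-1;-1; 1; 0; 1; 0;-1; 1; 0];
      [:: 1; 0; 0; 0; 0; 1; 0; 1;-1];
      [::-1; 1; 0; 0; 0;-1;-1; 0; 0];
      [::-1; 0;-1;-1; 0; 0; 1; 0; 0]].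

Definition Bc (R : fieldType) (i j : 'I_9) : R :=
  (nth 0 (nth [::] Btable i) j)%:~R / 4%:R.

(* {x^u, x^v} = (\sum_{i,j} u_i v_j Bc i j) x^(u+v): the unique extension of
   the generator brackets by bilinearity, antisymmetry and Leibniz rule. *)
Definition mono_form (R : fieldType) (u v : expo) : R :=
  \sum_(i < 9) \sum_(j < 9) (u ord0 i)%:~R * (v ord0 j)%:~R * Bc R i j.

Definition lbracket (R : fieldType) (P Q : laurent R) : laurent R :=
  [seq (p.1 * q.1 * mono_form R p.2 q.2, p.2 + q.2) | p <- P, q <- Q].

Definition casimir (R : fieldType) (P : laurent R) : Prop :=
  forall Q : laurent R, leq_laurent (lbracket P Q) [::].

Definition v_bdeghi : expo :=
  \row_(j < 9) (if nat_of_ord j \in [:: 1; 3; 4; 6; 7; 8]%N then 1 else 0)%:Z.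

Definition laurent_in_bdeghi (R : fieldType) (s : seq (R * int)) : laurent R :=
  [seq (t.1, t.2 *: v_bdeghi) | t <- s].

(* Main.v *)
Require Import Defs.
From mathcomp Require Import all_boot all_order all_algebra.
From mathcomp Require Import zify ring.
Import Order.TTheory GRing.Theory Num.Theory.
Local Open Scope ring_scope.

Definition T (i j : 'I_9) : int := nth 0 (nth [::] Btable i) j.

Lemma sum9 (F : 'I_9 -> int) : \sum_(i < 9) F i =
  F (inord 0) + (F (inord 1) + (F (inord 2) + (F (inord 3) + (F (inord 4) +
  (F (inord 5) + (F (inord 6) + (F (inord 7) + (F (inord 8) + 0)))))))).
Proof.
rewrite -(eq_bigr _ (fun i _ => congr1 F (inord_val i))) /=.
by rewrite -(big_mkord xpredT (fun i => F (inord i))) unlock /=.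
Qed.

Definition kern (u : expo) := forall j : 'I_9, \sum_(i < 9) u ord0 i * T i j = 0.

Lemma kern_v : kern v_bdeghi.
Proof.
move=> j; rewrite sum9 /v_bdeghi !mxE /T !inordK //=.
case: j => [[|[|[|[|[|[|[|[|[|//]]]]]]]]] Hj] /=; done.
Qed.

Lemma kern_inv {u} : kern u -> u = (u ord0 (inord 1)) *: v_bdeghi.
Proof.
move=> H.
have E : forall k : 'I_9, \sum_(i < 9) u ord0 i * T i (inord k) = 0 by move=> k; apply: H.
move: (E (inord 0)) (E (inord 1)) (E (inord 2)) (E (inord 3)) (E (inord 4))
  (E (inord 5)) (E (inord 6)) (E (inord 7)) (E (inord 8)).
rewrite !sum9 /T !inordK //= => e0 e1 e2 e3 e4 e5 e6 e7 e8.
apply/rowP => j; rewrite !mxE -(inord_val j).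
case: j => [[|[|[|[|[|[|[|[|[|//]]]]]]]]] Hj] /=; rewrite !inordK //=.
all: rewrite (_ : (0 : 'I_1) = ord0); [lia| by apply/val_inj].
Qed.

Section S.
Variable R : fieldType.

Lemma mono_formE (u w : expo) : mono_form R u w =
  (\sum_(j < 9) w ord0 j * \sum_(i < 9) u ord0 i * T i j)%:~R / 4%:R.
Proof.
rewrite /mono_form /Bc exchange_big rmorph_sum mulr_suml; apply eq_bigr => j _.
rewrite mulr_sumr rmorph_sum mulr_suml; apply eq_bigr => i _.
by rewrite !rmorphM /T /=; ring.
Qed.

Lemma mono_kern u w : kern u -> mono_form R u w = 0.
Proof. by move=> H; rewrite mono_formE big1 ?mul0r // => j _; rewrite H mulr0. Qed.

Lemma kern_scale k : kern (k *: v_bdeghi).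
Proof.
move=> j; transitivity (k * \sum_(i < 9) v_bdeghi ord0 i * T i j); last by rewrite kern_v mulr0.
rewrite mulr_sumr.
by apply eq_bigr => i _; rewrite mxE mulrA.
Qed.

Lemma group (P : laurent R) (G : expo -> R) :
  \sum_(p <- P) p.1 * G p.2 = \sum_(u <- undup (map snd P)) lcoef P u * G u.
Proof.
have -> : \sum_(u <- undup (map snd P)) lcoef P u * G u =
  \sum_(u <- undup (map snd P)) \sum_(p <- P) (p.2 == u)%:R * (p.1 * G p.2).
  apply eq_bigr => u _; rewrite /lcoef mulr_suml big_mkcond; apply eq_bigr => p _.
  by case: eqP => [->|]; rewrite ?mul1r ?mul0r.
rewrite exchange_big /= big_seq [RHS]big_seq; apply eq_bigr => p hp; rewrite -mulr_suml.
suff -> : \sum_(i <- undup [seq i.2 | i <- P]) ((p.2 == i)%:R : R) = 1 by rewrite mul1r.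
have hin : p.2 \in undup [seq i.2 | i <- P] by rewrite mem_undup; apply/map_f: hp.
rewrite (big_rem _ hin) /= eqxx big1_seq; first by rewrite addr0.
move=> i /= hi.
case: eqP hi => // <-; by rewrite mem_rem_uniqF // undup_uniq.
Qed.

Lemma lcoef_nil w : lcoef ([::] : laurent R) w = 0.
Proof. by rewrite /lcoef big_nil. Qed.

Definition Gq (Q : laurent R) (w u : expo) : R :=
  \sum_(q <- Q) (if u + q.2 == w then q.1 * mono_form R u q.2 else 0).

Lemma lcoef_br (P Q : laurent R) w :
  lcoef (lbracket P Q) w = \sum_(u <- undup (map snd P)) lcoef P u * Gq Q w u.
Proof.
rewrite -group /lcoef /lbracket big_mkcond big_allpairs_dep /=.
apply eq_bigr => p _; rewrite /Gq mulr_sumr; apply eq_bigr => q _ /=.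
by case: ifP; rewrite ?mulr0 // mulrA.
Qed.

Lemma casimir_kern (P : laurent R) : (forall u, lcoef P u != 0 -> kern u) -> casimir P.
Proof.
move=> H Q w; rewrite lcoef_br lcoef_nil big1_seq // => u _.
case: (eqVneq (lcoef P u) 0) => [->|/H k]; first by rewrite mul0r.
rewrite /Gq big1 ?mulr0 // => q _; rewrite (mono_kern _ _ k) mulr0; by case: ifP.
Qed.

Lemma in_supp (P : laurent R) u : lcoef P u != 0 -> u \in undup (map snd P).
Proof.
apply: contraR; rewrite mem_undup => hu; rewrite /lcoef big1_seq // => t /andP [/eqP et ht].
by case/negP: hu; rewrite -et; apply/map_f.
Qed.

Lemma intr0 (HR : [pchar R] =i pred0) (z : int) : z%:~R = 0 :> R -> z = 0.
Proof.
have Hn := (pcharf0P R).1 HR.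
case: z => n; rewrite ?NegzE.
  by move=> /eqP; rewrite -pmulrn Hn => /eqP ->.
by rewrite mulrNz => /eqP; rewrite oppr_eq0 -pmulrn Hn.
Qed.

Lemma dsum (j : 'I_9) (S : 'I_9 -> int) :
  \sum_(k < 9) (delta_mx 0 j : expo) ord0 k * S k = S j.
Proof.
rewrite (bigD1 j) //= big1 ?addr0; first by rewrite mxE !eqxx mul1r.
by move=> k hk; rewrite mxE eq_sym (negbTE hk) andbF mul0r.
Qed.

Lemma kern_casimir (HR : [pchar R] =i pred0) (P : laurent R) u : casimir P -> lcoef P u != 0 -> kern u.
Proof.
move=> C nz j.
pose e : expo := delta_mx 0 j.
have := C [:: (1, e)] (u + e); rewrite lcoef_br lcoef_nil.
rewrite (big_rem _ (in_supp _ _ nz)) /= big1_seq.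
  rewrite addr0 /Gq big_cons big_nil eqxx addr0 mul1r => /eqP; rewrite mulf_eq0 (negbTE nz) /= => /eqP.
  rewrite mono_formE dsum => /eqP; rewrite mulf_eq0 invr_eq0 => /orP [/eqP|].
    by move/(intr0 HR).
  by rewrite ((pcharf0P R).1 HR).
move=> u' /= hu'; rewrite /Gq big_cons big_nil addr0 mul1r.
case: eqP; last by rewrite mulr0.
move/addIr => eu; move: hu'; rewrite eu mem_rem_uniqF // undup_uniq //.
Qed.
End S.

Theorem mainTheorem7 (R : fieldType) (HR : [pchar R] =i pred0) :
  casimir [:: ((1 : R), v_bdeghi)] /\
  (forall P : laurent R,
     casimir P <-> exists s : seq (R * int), leq_laurent P (laurent_in_bdeghi s)).
Proof.
split.
  apply: casimir_kern => u; rewrite /lcoef big_cons big_nil /=.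
  case: (v_bdeghi =P u) => [<- _|_]; first exact: kern_v.
  by rewrite eqxx.
move=> P; split.
  move=> C.
  exists [seq (lcoef P u, u ord0 (inord 1)) | u <- undup (map snd P)] => w.
  have -> : lcoef P w = \sum_(u <- undup (map snd P)) lcoef P u * (u == w)%:R.
    rewrite -group /lcoef big_mkcond; apply eq_bigr => p _.
    by case: eqP; rewrite ?mulr1 ?mulr0.
  have -> : lcoef (laurent_in_bdeghi [seq (lcoef P u, u ord0 (inord 1)) | u <- undup (map snd P)]) w
     = \sum_(u <- undup (map snd P)) lcoef P u * ((u ord0 (inord 1) *: v_bdeghi) == w)%:R.
    rewrite {1}/lcoef /laurent_in_bdeghi !big_map big_mkcond; apply eq_bigr => u _ /=.
    by case: eqP; rewrite ?mulr1 ?mulr0.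
  apply eq_bigr => u _.
  case: (eqVneq (lcoef P u) 0) => [->|nz]; first by rewrite !mul0r.
  rewrite -(kern_inv (@kern_casimir R HR P u C nz)).
  by case: eqP; rewrite ?mulr1 ?mulr0.
case=> s H; apply: casimir_kern => u nz.
have := @in_supp R (laurent_in_bdeghi s) u; rewrite -H => /(_ nz).
rewrite mem_undup /laurent_in_bdeghi -map_comp => /mapP [t _ ->].
exact: kern_scale.
Qed.
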